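(* Let $p$ be a prime. For integers $s,j\ge1$ with $p\nmid s$, let $\rho_{s,j}$ be the unique root of $X^2-sX+p^j$ which is a $p$-adic unit (with respect to the fixed embedding $\bar{\mathbb Q}\hookrightarrow\bar{\mathbb Q}_p$). Let $\mathbf e=\{e(s,j)\}$ be a nonempty finite collection of positive integers indexed by pairs $(s,j)$ of integers with $s,j\ge1$, $p\nmid s$ and $1\le s<2p^{j/2}$. Then $\rho_{\mathbf e}:=\prod_{s,j}\rho_{s,j}^{e(s,j)}$ is not a root of unity.
   Context: A fixed embedding $\bar{\mathbb Q}\hookrightarrow\bar{\mathbb Q}_p$ is used to decide which root of $X^2-sX+p^j$ is a $p$-adic unit. *)

(* Defs.v *)
From HB Require Import structures.
From mathcomp Require Import all_boot all_order all_algebra all_field.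
Set Implicit Arguments. Unset Strict Implicit. Unset Printing Implicit Defensive.
Import Order.TTheory GRing.Theory Num.Theory.
Local Open Scope ring_scope.

(* A fixed embedding Qbar -> Qbar_p is encoded by the absolute value it induces
   on Qbar (= algC): a non-archimedean absolute value on algC extending the
   normalized p-adic absolute value of Q (|p|_p = 1/p).  Its values p^(rational)
   are real algebraic numbers, so we let it take values in algC. *)
Definition padic_abs (p : nat) (v : algC -> algC) : Prop :=
  [/\ forall x, 0 <= v x,
      forall x, v x = 0 <-> x = 0,
      forall x y, v (x * y) = v x * v y,
      forall x y, v (x + y) <= Num.max (v x) (v y)
    & v p%:R = (p%:R)^-1].

Definition padic_unit (v : algC -> algC) (x : algC) : Prop := v x = 1.

Definition admissible (p s j : nat) : bool :=
  [&& (0 < s)%N, (0 < j)%N, ~~ (p %| s)%N & (s ^ 2 < 4 * p ^ j)%N].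

(* Main.v *)
Require Import Defs.
From HB Require Import structures.
From mathcomp Require Import all_boot all_order all_algebra all_field.
From mathcomp Require Import ring lra.
Import Order.TTheory GRing.Theory Num.Theory.
Local Open Scope ring_scope.

Lemma key (p s j : nat) (r : algC) : prime p -> admissible p s j ->
  r ^+ 2 - s%:R * r + (p ^ j)%:R = 0 -> 1 < `|r|.
Proof.
move=> pp /and4P[s0 j0 _ sl] E.
have nr : r^* != r.
  apply/negP => /eqP /CrealP rR.
  have r2 : (s%:R - 2 * r) ^+ 2 = (s ^ 2)%:R - (4 * p ^ j)%:R :> algC.
    rewrite natrX natrM; apply/eqP; rewrite -subr_eq0; apply/eqP.
    have -> : (s%:R - 2 * r) ^+ 2 - ((s%:R) ^+ 2 - 4%:R * (p ^ j)%:R) =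
      4 * (r ^+ 2 - s%:R * r + (p ^ j)%:R) :> algC by ring.
    by rewrite E mulr0.
  have : 0 <= (s%:R - 2 * r) ^+ 2 :> algC.
    by rewrite -realEsqr rpredB ?rpredM ?rpred_nat.
  rewrite r2 subr_ge0 ler_nat leqNgt sl //.
have Ec : r^* ^+ 2 - s%:R * r^* + (p ^ j)%:R = 0.
  by rewrite -(conjC_nat _ s) -(conjC_nat _ (p ^ j)) -rmorphXn -!rmorphM -rmorphB -rmorphD E rmorph0.
have Hs : r^* = s%:R - r.
  have : (r - r^*) * (r + r^* - s%:R) = 0.
    have -> : (r - r^*) * (r + r^* - s%:R) =
      (r ^+ 2 - s%:R * r + (p ^ j)%:R) - (r^* ^+ 2 - s%:R * r^* + (p ^ j)%:R) by ring.
    by rewrite E Ec subrr.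
  move/eqP; rewrite mulf_eq0 subr_eq0 eq_sym (negbTE nr) /= => /eqP H.
  apply/eqP; rewrite -subr_eq0 -H; apply/eqP; ring.
have N2 : `|r| ^+ 2 = (p ^ j)%:R.
  rewrite normCK Hs; apply/eqP; rewrite -subr_eq0.
  have -> : r * (s%:R - r) - (p ^ j)%:R = - (r ^+ 2 - s%:R * r + (p ^ j)%:R) by ring.
  by rewrite E oppr0.
rewrite -(expr_gt1 (n:=2)) // N2 ltr1n.
by rewrite -{1}(expn0 p) ltn_exp2l ?prime_gt1.
Qed.

Theorem lemma2p3 (p : nat) (v : algC -> algC)
  (idx : seq (nat * nat)) (e : nat -> nat -> nat) (rho : nat -> nat -> algC) :
  prime p -> padic_abs p v ->
  idx != [::] -> uniq idx ->
  (forall sj, sj \in idx -> admissible p sj.1 sj.2) ->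
  (forall sj, sj \in idx -> (0 < e sj.1 sj.2)%N) ->
  (forall sj, sj \in idx ->
     (rho sj.1 sj.2) ^+ 2 - (sj.1)%:R * rho sj.1 sj.2 + (p ^ sj.2)%:R = 0
     /\ padic_unit v (rho sj.1 sj.2)) ->
  ~ (exists n : nat, (0 < n)%N /\
       (\prod_(sj <- idx) (rho sj.1 sj.2) ^+ (e sj.1 sj.2)) ^+ n = 1).
Proof.
move=> pp _ ne _ adm epos root [n [n0 H]].
have G : forall l : seq (nat * nat), l != [::] -> {subset l <= idx} ->
    1 < `|\prod_(sj <- l) (rho sj.1 sj.2) ^+ (e sj.1 sj.2)|.
  elim=> [//|a l IH] _ sub.
  have ain : a \in idx by apply: sub; rewrite mem_head.
  have ha : 1 < `|rho a.1 a.2 ^+ e a.1 a.2|.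
    have hr := key _ _ _ (rho a.1 a.2) pp (adm _ ain) (proj1 (root _ ain)).
    by rewrite normrX exprn_egt1 // -lt0n epos.
  rewrite big_cons normrM.
  have sub' : {subset l <= idx} by move=> x xl; apply: sub; rewrite in_cons xl orbT.
  case: l IH sub sub' => [|b l] IH _ sub'.
    by rewrite big_nil normr1 mulr1.
  by apply: (mulr_egte1 _).2 => //; apply: IH.
have := G idx ne (fun x h => h).
move=> g; have := congr1 (fun x => `|x|) H; rewrite normrX normr1 => /eqP.
by rewrite (gt_eqF _) // exprn_egt1 // -lt0n.
Qed.
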